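(* Let $\alpha\in\mathbb{N}$, let $m$ be a positive odd integer with $m>4\alpha+2$, and let $\mathbb{S}=\langle 4,4\alpha+2,m\rangle$, with Betti elements $\beta_1=\beta_2=8\alpha+4$ and $\beta_3=2m$. Then the factorizations of $\beta_1=\beta_2$ (with respect to $(4,4\alpha+2,m)$) are exactly $(2\alpha+1,0,0)$ and $(0,2,0)$, and the factorizations of $\beta_3$ are exactly $(0,0,2)$ and the tuples $\left(\frac{m-k(2\alpha+1)}{2},k,0\right)$ where $k$ ranges over positive odd integers with $k\le\frac{m}{2\alpha+1}$.
   Context: $\mathbb{N}=\{0,1,2,\dots\}$. For a numerical semigroup $\mathbb{S}=\langle a_1,a_2,a_3\rangle$ (the set of $\mathbb{N}$-linear combinations of $a_1,a_2,a_3$) and $a\in\mathbb{S}$, a factorization of $a$ is a tuple $(\eta_1,\eta_2,\eta_3)\in\mathbb{N}^3$ with $\eta_1a_1+\eta_2a_2+\eta_3a_3=a$. *)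

(* Defs.v *)
From mathcomp Require Import all_boot.

Definition is_factorization (a1 a2 a3 a : nat) (e : nat * nat * nat) : Prop :=
  let: (e1, e2, e3) := e in e1 * a1 + e2 * a2 + e3 * a3 = a.

(* Main.v *)
Require Import Defs.
From mathcomp Require Import all_boot zify.

Lemma oddE n : exists q, n = 2 * q + odd n.
Proof. exists n./2; rewrite -[n in LHS]odd_double_half -muln2; lia. Qed.

Theorem theorem5 (alpha m : nat) :
  0 < m -> odd m -> 4 * alpha + 2 < m ->
  (forall e1 e2 e3 : nat,
     is_factorization 4 (4 * alpha + 2) m (8 * alpha + 4) (e1, e2, e3) <->
     ((e1, e2, e3) = (2 * alpha + 1, 0, 0) \/ (e1, e2, e3) = (0, 2, 0))) /\
  (forall e1 e2 e3 : nat,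
     is_factorization 4 (4 * alpha + 2) m (2 * m) (e1, e2, e3) <->
     ((e1, e2, e3) = (0, 0, 2) \/
      exists k : nat, [/\ 0 < k, odd k, k * (2 * alpha + 1) <= m &
        (e1, e2, e3) = ((m - k * (2 * alpha + 1)) %/ 2, k, 0)])).
Proof.
move=> m0 om lt; have [j hj] := oddE m; rewrite om in hj.
split=> e1 e2 e3; rewrite /is_factorization; split.
- move=> h.
  have he3 : e3 <= 1 by case: e3 h => [|[|[|e3]]] //; nia.
  case: e3 he3 h => [|[|]] // _ h; last by nia.
  have [q hq] := oddE e2.
  have he2 : e2 <= 2 by nia.
  case: e2 he2 h hq => [|[|[|]]] // _ h hq; [left|lia|right]; congr (_,_,_); lia.
- by case=> [[-> -> ->]|[-> -> ->]]; lia.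
- move=> h.
  have he3 : e3 <= 2 by case: e3 h => [|[|[|e3]]] //; nia.
  case: e3 he3 h => [|[|[|]]] // _ h.
  + right; exists e2.
    have [q hq] := oddE e2.
    case oe: (odd e2) hq => hq.
      split => //; [lia|nia|congr (_,_,_); nia].
    nia.
  + have [q hq] := oddE e2; nia.
  + left; congr (_,_,_); nia.
- case=> [[-> -> ->]|[k [k0 ok km [-> -> ->]]]]; first lia.
  have [q hq] := oddE k; rewrite ok in hq.
  nia.
Qed.
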